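(* For all $n\in\mathbb{N}$ the bistatistic $(\operatorname{veh}',\operatorname{SIVEH})$ is Euler–Mahonian on $\mathfrak{S}_n$, i.e. $$\sum_{\pi\in\mathfrak{S}_n}s^{\operatorname{veh}'(\pi)}q^{\operatorname{SIVEH}(\pi)}=\sum_{\pi\in\mathfrak{S}_n}s^{\operatorname{des}(\pi)}q^{\operatorname{MAJ}(\pi)}.$$
   Context: For $\pi=a_1\cdots a_n\in\mathfrak{S}_n$: $\operatorname{Des}(\pi)=\{i\in[n-1]:a_i>a_{i+1}\}$, $\operatorname{des}(\pi)=|\operatorname{Des}(\pi)|$, $\operatorname{MAJ}(\pi)=\sum_{i\in\operatorname{Des}(\pi)}i$. The increasing unordered tree $T'(\pi)$ has root labeled $0$: if $b$ is a right-to-left minimum of $\pi$ then $b$ is a child of the root; otherwise $b$ is a child of the leftmost letter $a$ to the right of $b$ with $a<b$. $\operatorname{veh}'(\pi)$ is the number of non-root vertices of even height in $T'(\pi)$ (root at height $0$), $\operatorname{EV}(\pi)$ is the set of indices $i$ such that $a_i$ has even height, and $\operatorname{SIVEH}(\pi)=\sum_{i\in\operatorname{EV}(\pi)}i$. *)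

(* Defs.v *)
From mathcomp Require Import all_boot all_algebra all_fingroup.
Set Implicit Arguments. Unset Strict Implicit. Unset Printing Implicit Defensive.

(* Conventions: a permutation pi : 'S_n (of {0..n-1}) is identified with the
   word a_1 ... a_n where a_i = (pi (i-1)) + 1 \in [n].  Internally we use
   0-based positions k = i - 1 on the word  w = word pi  (a seq nat). *)

Definition word n (pi : 'S_n) : seq nat := [seq (pi i).+1 | i <- enum 'I_n].

Section Stats.
Variable w : seq nat.
Local Notation a k := (nth 0 w k).
Local Notation n := (size w).

Definition Des : seq nat := [seq k.+1 | k <- iota 0 n.-1 & a k > a k.+1].
Definition des : nat := size Des.
Definition MAJ : nat := \sum_(i <- Des) i.

(* Parent in T'(pi) of the letter at (0-based) position k:
   None = the root 0 (k is a right-to-left minimum);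
   Some j = position of the leftmost letter to the right of a_k smaller than a_k. *)
Definition parent_pos (k : nat) : option nat :=
  let j := find (fun j => (k < j) && (a j < a k)) (iota 0 n) in
  if j < n then Some j else None.

(* Height (root at height 0); the fuel n suffices since parents lie strictly
   to the right. *)
Fixpoint height_fuel (fuel k : nat) : nat :=
  match fuel with
  | 0 => 0
  | f.+1 => match parent_pos k with
            | None => 1
            | Some j => (height_fuel f j).+1
            end
  end.
Definition height (k : nat) : nat := height_fuel n k.

Definition EV : seq nat := [seq k.+1 | k <- iota 0 n & ~~ odd (height k)].
Definition veh' : nat := size EV.
Definition SIVEH : nat := \sum_(i <- EV) i.
End Stats.

(* Main.v *)
Require Import Defs.
From mathcomp Require Import all_boot all_algebra all_fingroup zify ring.


Lemma nth_map0 (f : nat -> nat) w j : f 0 = 0 -> nth 0 (map f w) j = f (nth 0 w j).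
Proof.
move=> f0; case: (ltnP j (size w)) => h; first by rewrite (nth_map 0).
by rewrite !nth_default ?size_map.
Qed.

Section Mono.
Variable f : nat -> nat.
Hypothesis fmono : forall x y, (f x < f y) = (x < y).
Hypothesis f0 : f 0 = 0.

Lemma parent_pos_map w k : parent_pos (map f w) k = parent_pos w k.
Proof.
rewrite /parent_pos size_map (@eq_find _ _ (fun j => (k < j) && (nth 0 w j < nth 0 w k))) //.
by move=> j; rewrite !nth_map0 // fmono.
Qed.

Lemma hf_map w fu k : height_fuel (map f w) fu k = height_fuel w fu k.
Proof.
elim: fu k => [//|fu IH] k /=; rewrite parent_pos_map.
by case: (parent_pos w k) => // j; rewrite IH.
Qed.

Lemma height_map w k : height (map f w) k = height w k.
Proof. by rewrite /height size_map hf_map. Qed.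

Lemma EV_map w : EV (map f w) = EV w.
Proof.
rewrite /EV size_map; congr map; apply: eq_filter => k; by rewrite height_map.
Qed.

Lemma Des_map w : Des (map f w) = Des w.
Proof.
rewrite /Des size_map; congr map; apply: eq_filter => k; by rewrite !nth_map0 // fmono.
Qed.
End Mono.

Lemma iota_find (p : pred nat) w : find (fun j => p (nth 0 w j)) (iota 0 (size w)) = find p w.
Proof.
by rewrite -(find_map (nth 0 w) p) -/(mkseq _ _) mkseq_nth.
Qed.

Lemma iota1S m : iota 1 m = map S (iota 0 m).
Proof. by rewrite (iotaDl 1 0). Qed.

Lemma parent_pos_spec w k j : parent_pos w k = Some j -> k < j < size w.
Proof.
rewrite /parent_pos; set p := (fun j => _); case: ifP => // H [<-].
have := @nth_find _ 0 p (iota 0 (size w)); rewrite has_find size_iota => /(_ H).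
by rewrite /p nth_iota // add0n => /andP[-> _]; rewrite H.
Qed.

Lemma parent_pos_cons x s k : parent_pos (x :: s) k.+1 = omap S (parent_pos s k).
Proof.
rewrite /parent_pos /= iota1S find_map /preim /=.
rewrite (@eq_find _ _ (fun j => (k < j) && (nth 0 s j < nth 0 s k))) //.
by rewrite ltnS; case: ifP.
Qed.

Lemma hf_cons x s fu k : height_fuel (x :: s) fu k.+1 = height_fuel s fu k.
Proof.
elim: fu k => [//|fu IH] k /=; rewrite parent_pos_cons.
by case: (parent_pos s k) => //= j; rewrite IH.
Qed.

Lemma hf_fuel s : forall fu g k, size s - k <= fu -> size s - k <= g -> 0 < fu -> 0 < g ->
  height_fuel s fu k = height_fuel s g k.
Proof.
elim=> [//|fu IH] [//|g] k h1 h2 _ _ /=.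
case E: (parent_pos s k) => [j|//]; have /andP[kj js] := @parent_pos_spec s k j E.
congr S; apply: IH; lia.
Qed.

Lemma height_cons x s k : k < size s -> height (x :: s) k.+1 = height s k.
Proof.
move=> ks; rewrite /height hf_cons; apply: hf_fuel => /=; lia.
Qed.


Definition shift v x := x + (v <= x).
Definition prep v w := v :: map (shift v) w.
Definition cc w x := let j := find (fun y => y < x) w in if j < size w then height w j else 0.
Definition G w := count (fun x => ~~ odd (cc w x)) (iota 1 (size w).+1).

Lemma shift_mono v : 0 < v -> forall x y, (shift v x < shift v y) = (x < y).
Proof. move=> v0 x y; rewrite /shift; case: (leqP v x); case: (leqP v y) => /=; lia. Qed.

Lemma shift0 v : 0 < v -> shift v 0 = 0.
Proof. by rewrite /shift; case: v. Qed.

Lemma shift_lt v x y : y <= v -> (shift v x < y) = (x < y).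
Proof. move=> yv; rewrite /shift; case: (leqP v x) => /=; lia. Qed.

Lemma height0_cons v s : height (v :: s) 0 = (cc s v).+1.
Proof.
rewrite /height /= /parent_pos /= iota1S find_map.
rewrite (@eq_find _ _ (fun j => nth 0 s j < v)) // (iota_find (fun y => y < v)) /cc ltnS.
by case: ifP => // _; rewrite hf_cons.
Qed.

Lemma EV_cons v s : EV (v :: s) = (if ~~ odd (height (v::s) 0) then [:: 1] else [::]) ++ map S (EV s).
Proof.
rewrite /EV /= iota1S filter_map -map_comp.
have -> : [seq x <- iota 0 (size s) | preim S (fun k => ~~ odd (height (v :: s) k)) x]
        = [seq x <- iota 0 (size s) | ~~ odd (height s x)].
  by apply: eq_in_filter => k; rewrite mem_iota => /andP[_ kl]; rewrite /preim /= height_cons.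
by case: ifP => _ /=; rewrite -map_comp.
Qed.

Lemma Des_cons v s : Des (v :: s) = (if (0 < size s) && (nth 0 s 0 < v) then [::1] else [::]) ++ map S (Des s).
Proof.
case: s => [//|y s]; rewrite /Des /= iota1S filter_map -map_comp.
by case: ifP => _ /=; rewrite -map_comp.
Qed.

Lemma cc_map v w x : 0 < v -> x <= v -> cc (map (shift v) w) x = cc w x.
Proof.
move=> v0 xv; rewrite /cc find_map size_map (@eq_find _ _ (fun y => y < x)); last first.
  by move=> y; rewrite /preim /= shift_lt.
by rewrite height_map //; [apply: shift_mono | apply: shift0].
Qed.

Lemma cc_prep_lt v w x : 0 < v -> v < x -> cc (prep v w) x = (cc w v).+1.
Proof.
move=> v0 vx; rewrite {1}/cc /prep /= vx /= height0_cons cc_map //.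
Qed.

Lemma cc_prep_ge v w x : 0 < v -> x <= v -> cc (prep v w) x = cc w x.
Proof.
move=> v0 xv; rewrite -(@cc_map v w x v0 xv) /cc /prep /=.
have -> : (v < x) = false by apply/negbTE; rewrite -leqNgt.
by rewrite ltnS; case: ifP => h //; rewrite height_cons.
Qed.

Lemma count_const T (b : bool) (s : seq T) : count (fun _ => b) s = b * size s.
Proof. elim: s => [|x s IH] /=; first by rewrite muln0. by rewrite IH mulnS. Qed.

Lemma G_prep v w : 0 < v -> v <= (size w).+1 ->
  G (prep v w) = if odd (cc w v) then (size w).+2 - count (fun x => odd (cc w x)) (iota 1 v)
                 else count (fun x => ~~ odd (cc w x)) (iota 1 v).
Proof.
move=> v0 vm; rewrite /G.
have -> : size (prep v w) = (size w).+1 by rewrite /= size_map.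
have -> : iota 1 (size w).+2 = iota 1 v ++ iota (1 + v) ((size w).+2 - v).
  by rewrite -iotaD subnKC //; lia.
rewrite count_cat.
rewrite (@eq_in_count _ _ (fun x => ~~ odd (cc w x)) (iota 1 v)); last first.
  by move=> x; rewrite mem_iota => /andP[_ h]; rewrite cc_prep_ge //; lia.
rewrite (@eq_in_count _ _ (fun _ => odd (cc w v)) (iota (1 + v) _)); last first.
  by move=> x; rewrite mem_iota => /andP[h _]; rewrite cc_prep_lt //= ?negbK //; lia.
rewrite count_const size_iota.
have HC : count (fun x => odd (cc w x)) (iota 1 v) + count (fun x => ~~ odd (cc w x)) (iota 1 v)
   = size (iota 1 v) := count_predC _ _.
rewrite size_iota in HC.
case: (odd (cc w v)) => /=; rewrite ?mul1n ?mul0n ?addn0; lia.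
Qed.

Import GRing.Theory.

Lemma iota1_rcons n : iota 1 n.+1 = rcons (iota 1 n) n.+1.
Proof. by have := iotaD 1 n 1; rewrite addn1 cats1 add1n. Qed.

Section AL.
Variable b : nat -> bool.
Definition Ec n := count (fun x => ~~ b x) (iota 1 n).
Definition Oc n := count b (iota 1 n).

Lemma EcS n : Ec n.+1 = (Ec n + ~~ b n.+1)%N.
Proof. by rewrite /Ec iota1_rcons -cats1 count_cat /= addn0. Qed.
Lemma OcS n : Oc n.+1 = (Oc n + b n.+1)%N.
Proof. by rewrite /Oc iota1_rcons -cats1 count_cat /= addn0. Qed.
Lemma EOc n : (Ec n + Oc n)%N = n.
Proof. elim: n => [//|n IH]; rewrite EcS OcS; case: (b n.+1) => /=; lia. Qed.

Lemma C1 N t : count (fun v => ~~ b v && (Ec v == t)) (iota 1 N) = (0 < t <= Ec N).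
Proof.
elim: N => [|N IH]; first by rewrite /=; case: t.
rewrite iota1_rcons -cats1 count_cat IH /= EcS; case: (b N.+1) => /=.
  by rewrite !addn0.
by rewrite addn0; case: (ltnP 0 t); case: (ltngtP t (Ec N + 1)); lia.
Qed.

Lemma C2 N t : count (fun v => b v && (Oc v == t)) (iota 1 N) = (0 < t <= Oc N).
Proof.
elim: N => [|N IH]; first by rewrite /=; case: t.
rewrite iota1_rcons -cats1 count_cat IH /= OcS; case: (b N.+1) => /=.
  by rewrite addn0; case: (ltnP 0 t); case: (ltngtP t (Oc N + 1)); lia.
by rewrite !addn0.
Qed.
End AL.


Section P3R.
Import GRing.Theory.
Local Open Scope ring_scope.
Lemma sum_count (R : nmodType) (x : R) T (P : pred T) (s : seq T) :
  \sum_(i <- s) x *+ P i = x *+ count P s.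
Proof. elim: s => [|y s IH]; first by rewrite big_nil. by rewrite big_cons IH /= mulrnDr. Qed.


Lemma AL (R : nmodType) (b : nat -> bool) (F : bool -> R) N t :
  \sum_(v <- iota 1 N) (if ((if b v then N.+1 - Oc b v else Ec b v) == t)%N then F (b v) else 0)
  = if (0 < t <= N)%N then F (Ec b N < t)%N else 0.
Proof.
transitivity (\sum_(v <- iota 1 N) (F true *+ (b v && (Oc b v == N.+1 - t)%N)
                + F false *+ (~~ b v && (Ec b v == t)%N))).
  apply: eq_big_seq => v; rewrite mem_iota => /andP[v1 vN].
  case: v v1 vN => [//|u] _ uN.
  case bv: (b u.+1) => /=.
    have O1 : (0 < Oc b u.+1)%N by rewrite OcS bv addn1.
    have O2 : (Oc b u.+1 <= u.+1)%N by rewrite /Oc -[X in (_ <= X)%N](size_iota 1 u.+1) count_size.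
    have -> : (Oc b u.+1 == N.+1 - t)%N = (N.+1 - Oc b u.+1 == t)%N.
      by apply/eqP/eqP; lia.
    by case: eqP => _; rewrite ?mulr1n ?mulr0n ?addr0.
  by case: eqP => _; rewrite ?mulr1n ?mulr0n ?add0r.
rewrite big_split /= !sum_count C1 C2.
have HE := EOc b N.
case: ifP => /andP Ht.
  case: (ltnP (Ec b N) t) => h.
    have -> : (0 < N.+1 - t <= Oc b N)%N = true by apply/andP; split; lia.
    by rewrite andbF mulr1n mulr0n addr0.
  have -> : (0 < N.+1 - t <= Oc b N)%N = false by apply/negbTE/negP => /andP[]; lia.
  have -> : (0 < t)%N = true by lia.
  by rewrite mulr1n mulr0n add0r.
have -> : (0 < N.+1 - t <= Oc b N)%N = false by apply/negbTE/negP => /andP[]; lia.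
have -> : (0 < t <= Ec b N)%N = false by apply/negbTE/negP => /andP[]; lia.
by rewrite !mulr0n addr0.
Qed.

End P3R.


Fixpoint perms m : seq (seq nat) :=
  if m is m'.+1 then [seq prep v w | v <- iota 1 m, w <- perms m'] else [:: [::]].

Lemma perms_prop m w : w \in perms m -> (size w == m) && all (fun x => 0 < x <= m) w.
Proof.
elim: m w => [|m IH] w; first by rewrite inE => /eqP ->.
move=> /allpairsP [[v w'] [vI wP ->]]; have : v \in iota 1 m.+1 := vI; rewrite mem_iota => /andP[v1 vm].
have /andP[/eqP sw al] := IH _ wP.
rewrite /prep /= size_map sw eqxx /=; apply/andP; split; first lia.
apply/allP => x /mapP [y yw ->]; have := allP al y yw; rewrite /shift; case: (leqP v y) => /=; lia.
Qed.

Lemma perms_size m w : w \in perms m -> size w = m.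
Proof. by move/perms_prop => /andP[/eqP]. Qed.

Definition isperm m w := [&& uniq w, size w == m & all (fun x => 0 < x <= m) w].
Definition unshift v y := y - (v < y).

Lemma isperm_perms m w : isperm m w -> w \in perms m.
Proof.
elim: m w => [|m IH] w.
  by case: w => [|x w] //; rewrite /isperm /= ?andbF.
case: w => [|v w0]; first by rewrite /isperm /= ?andbF.
rewrite /isperm /= => /andP [/andP[vw0 u0] /and3P [/eqP sz vr al]].
have Hne : forall y, y \in w0 -> y != v by move=> y yw; apply/eqP => E; rewrite -E yw in vw0.
have -> : v :: w0 = prep v (map (unshift v) w0).
  rewrite /prep -map_comp map_id_in // => y yw /=; have := Hne y yw.
  rewrite /shift /unshift; case: (ltnP v y) => /= h; case: leqP => /= h2 /eqP; lia.
change (prep v (map (unshift v) w0) \in [seq prep v w | v <- iota 1 m.+1, w <- perms m]).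
apply: allpairs_f; first by rewrite mem_iota; lia.
have sz' : size w0 = m by case: sz.
apply: IH; rewrite /isperm size_map sz' eqxx /=; apply/andP; split.
  rewrite map_inj_in_uniq // => y z yw zw; have := Hne y yw; have := Hne z zw.
  rewrite /unshift; case: (ltnP v y); case: (ltnP v z) => /= h1 h2 /eqP h3 /eqP h4; lia.
apply/allP => x /mapP [y yw ->]; have := Hne y yw; have := allP al y yw.
rewrite /unshift; case: (ltnP v y) => /= h1 h2 /eqP h3; lia.
Qed.

Lemma size_perms m : size (perms m) = m`!.
Proof. elim: m => [//|m IH]; change (size [seq prep v w | v <- iota 1 m.+1, w <- perms m] = m.+1`!). by rewrite size_allpairs size_iota IH factS. Qed.

Lemma word_isperm n (pi : 'S_n) : isperm n (word pi).
Proof.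
rewrite /isperm /word size_map size_enum_ord eqxx /=; apply/andP; split.
  rewrite map_inj_uniq ?enum_uniq // => i j [] /val_inj; exact: perm_inj.
by apply/allP => x /mapP [i _ ->]; rewrite ltn_ord.
Qed.

Lemma word_inj n : injective (@word n).
Proof.
move=> p1 p2 /eq_in_map E; apply/permP => i; apply/val_inj.
by have := E i; rewrite mem_enum => /(_ isT) [].
Qed.

Lemma index_enumE (T : finType) : index_enum T = enum T.
Proof. by rewrite enumT /index_enum unlock. Qed.

Lemma perm_word n : perm_eq (map (@word n) (index_enum 'S_n)) (perms n).
Proof.
have U : uniq (map (@word n) (index_enum 'S_n)) by rewrite map_inj_uniq ?index_enum_uniq //; exact: word_inj.
have Sub : {subset map (@word n) (index_enum 'S_n) <= perms n}.
  by move=> w /mapP [pi _ ->]; apply: isperm_perms; apply: word_isperm.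
have Sz : size (perms n) <= size (map (@word n) (index_enum 'S_n)).
  by rewrite size_perms size_map index_enumE -cardT card_Sn.
have [Es Ei] := uniq_min_size U Sub Sz.
apply: uniq_perm => //; by rewrite (uniq_size_uniq U Ei) Es.
Qed.

Import GRing.Theory.
Local Open Scope ring_scope.

Section W.
Variable R : comRingType.

Definition wt (s q : R) (X : seq nat) := s ^+ size X * q ^+ (\sum_(i <- X) i)%N.

Lemma wt_step s q (e : bool) X :
  wt s q ((if e then [:: 1%N] else [::]) ++ map S X) = wt (s * q) q X * (if e then s * q else 1).
Proof.
rewrite /wt big_cat /= size_cat size_map big_map.
have -> : (\sum_(j <- X) j.+1 = \sum_(j <- X) j + size X)%N.
  by rewrite -sum1_size -big_split /=; apply: eq_bigr => i _; rewrite addn1.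
case: e; rewrite /= ?big_cons ?big_nil /= !exprD exprMn; ring.
Qed.

Lemma sum_pick (r : seq nat) (a : nat -> R) t : uniq r ->
  \sum_(v <- r) (if v == t then a v else 0) = if t \in r then a t else 0.
Proof.
move=> ur; rewrite -big_mkcond -big_filter; case: ifP => tr.
  by rewrite (@eq_filter _ _ (pred1 t)) // filter_pred1_uniq // big_seq1.
rewrite big1_seq // => v /andP[_]; rewrite mem_filter => /andP[/eqP -> ]; by rewrite tr.
Qed.

Section Gen.
Variables (q : R) (X : seq nat -> seq nat) (T : seq nat -> nat) (e : nat -> seq nat -> bool).
Hypothesis HX : forall m w v, w \in perms m -> v \in iota 1 m.+1 ->
  X (prep v w) = (if e v w then [:: 1%N] else [::]) ++ map S (X w).
Hypothesis HT : forall m w t (F : bool -> R), w \in perms m ->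
  \sum_(v <- iota 1 m.+1) (if T (prep v w) == t then F (e v w) else 0)
  = if (0 < t <= m.+1)%N then F (T w < t)%N else 0.
Hypothesis HB : forall m w, w \in perms m -> (T w < m.+2)%N.

Definition A m t s := \sum_(w <- perms m | T w == t) wt s q (X w).

Lemma partition_T m (H : seq nat -> R) :
  \sum_(w <- perms m) H w = \sum_(t' <- iota 0 m.+2) \sum_(w <- perms m | T w == t') H w.
Proof.
transitivity (\sum_(w <- perms m) \sum_(t' <- iota 0 m.+2) (if t' == T w then H w else 0)).
  apply: eq_big_seq => w wP; rewrite sum_pick ?iota_uniq // mem_iota add0n HB //.
rewrite exchange_big; apply: eq_bigr => t' _; rewrite [RHS]big_mkcond; apply: eq_bigr => w _.
by rewrite eq_sym.
Qed.

Lemma A_rec m t s : A m.+1 t s = if (0 < t <= m.+1)%N then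
  \sum_(t' <- iota 0 m.+2) A m t' (s * q) * (if (t' < t)%N then s * q else 1) else 0.
Proof.
rewrite /A big_mkcond.
change (\sum_(i <- [seq prep v w | v <- iota 1 m.+1, w <- perms m]) (if T i == t then wt s q (X i) else 0)
  = if (0 < t <= m.+1)%N then
  \sum_(t' <- iota 0 m.+2) (\sum_(w <- perms m | T w == t') wt (s * q) q (X w)) * (if (t' < t)%N then s * q else 1) else 0).
rewrite big_allpairs_dep exchange_big.
transitivity (\sum_(w <- perms m) (if (0 < t <= m.+1)%N then wt (s * q) q (X w) * (if (T w < t)%N then s * q else 1) else 0)).
  apply: eq_big_seq => w wP.
  rewrite -(@HT m w t (fun b => wt (s * q) q (X w) * (if b then s * q else 1)) wP).
  apply: eq_big_seq => v vP; rewrite (@HX m w v wP vP) wt_step //.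
case: (0 < t <= m.+1)%N; last by apply: big1.
rewrite (partition_T m (fun w => wt (s*q) q (X w) * (if (T w < t)%N then s*q else 1))).
apply: eq_bigr => t' _; rewrite big_distrl /=.
by apply: eq_bigr => w /eqP ->.
Qed.
End Gen.
End W.


Definition eEV v w := odd (cc w v).
Definition TD (w : seq nat) := head 1%N w.
Definition eD v (w : seq nat) := (0 < size w)%N && (nth 0%N w 0 < v)%N.

Lemma v_pos m v : v \in iota 1 m.+1 -> (0 < v <= m.+1)%N.
Proof. by rewrite mem_iota add1n ltnS. Qed.

Lemma HX_EV m w v : w \in perms m -> v \in iota 1 m.+1 ->
  EV (prep v w) = (if eEV v w then [:: 1%N] else [::]) ++ map S (EV w).
Proof.
move=> wP /v_pos /andP[v0 vm].
rewrite /prep EV_cons height0_cons cc_map // EV_map //; last 2 first.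
- exact: shift_mono. - exact: shift0.
by rewrite /= negbK.
Qed.

Lemma HT_EV (R : comRingType) m w t (F : bool -> R) : w \in perms m ->
  \sum_(v <- iota 1 m.+1) (if G (prep v w) == t then F (eEV v w) else 0)
  = if (0 < t <= m.+1)%N then F (G w < t)%N else 0.
Proof.
move=> wP; have sw := @perms_size m w wP.
rewrite (_ : G w = Ec (fun x => odd (cc w x)) m.+1); last by rewrite /G sw.
rewrite -(AL _ (fun x => odd (cc w x)) F m.+1 t).
apply: eq_big_seq => v /v_pos /andP[v0 vm]; rewrite G_prep ?sw //.
Qed.

Lemma HB_EV m w : w \in perms m -> (G w < m.+2)%N.
Proof.
move=> wP; rewrite /G (@perms_size m w wP) ltnS.
by rewrite -[X in (_ <= X)%N](size_iota 1 m.+1) count_size.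
Qed.

Lemma HX_D m w v : w \in perms m -> v \in iota 1 m.+1 ->
  Des (prep v w) = (if eD v w then [:: 1%N] else [::]) ++ map S (Des w).
Proof.
move=> wP /v_pos /andP[v0 vm].
rewrite /prep Des_cons size_map nth_map0 ?shift0 // shift_lt // Des_map //.
- exact: shift_mono. - exact: shift0.
Qed.

Lemma HT_D (R : comRingType) m w t (F : bool -> R) : w \in perms m ->
  \sum_(v <- iota 1 m.+1) (if TD (prep v w) == t then F (eD v w) else 0)
  = if (0 < t <= m.+1)%N then F (TD w < t)%N else 0.
Proof.
move=> wP; have sw := @perms_size m w wP.
rewrite (eq_bigr (fun v => if v == t then F (eD v w) else 0)) //.
rewrite sum_pick ?iota_uniq // mem_iota add1n ltnS.
case: ifP => // /andP[t1 tm]; congr F.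
rewrite /eD /TD; case: w wP sw => [|y w'] wP sw /=.
  by have -> : t = 1%N by move: tm; rewrite -sw /= => tm; lia.
by [].
Qed.

Lemma HB_D m w : w \in perms m -> (TD w < m.+2)%N.
Proof.
move=> /perms_prop /andP[_]; rewrite /TD; case: w => [|y w] /=; first lia.
by move=> /andP[/andP[_ h] _]; lia.
Qed.

Lemma AEq (R : comRingType) (q : R) m : forall t s,
  A _ q EV G m t s = A _ q Des TD m t s.
Proof.
elim: m => [|m IH] t s.
  rewrite /A /= !big_cons !big_nil.
  by [].
rewrite (@A_rec R q EV G eEV HX_EV (@HT_EV R) HB_EV) (@A_rec R q Des TD eD HX_D (@HT_D R) HB_D).
case: ifP => // _; apply: eq_bigr => t' _; by rewrite IH.
Qed.

Theorem corollary8p2 (n : nat) (R : comRingType) (s q : R) :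
  \sum_(pi : 'S_n) s ^+ veh' (word pi) * q ^+ SIVEH (word pi)
  = \sum_(pi : 'S_n) s ^+ des (word pi) * q ^+ MAJ (word pi).
Proof.
have E (X : seq nat -> seq nat) :
    \sum_(pi : 'S_n) wt _ s q (X (word pi)) = \sum_(w <- perms n) wt _ s q (X w).
  by rewrite -(perm_big _ (perm_word n)) big_map.
change (\sum_(pi : 'S_n) wt _ s q (EV (word pi)) = \sum_(pi : 'S_n) wt _ s q (Des (word pi))).
rewrite !E (partition_T _ _ HB_EV n) (partition_T _ _ HB_D n).
by apply: eq_bigr => t _; apply: AEq.
Qed.
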